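(* Let $t\geq 2$ be an integer, and let $\delta$ and $\alpha$ be nonnegative integers. Assume that every $K_{t+1}$-minor-free graph has minimum degree at most $\delta$, and that every $K_t$-minor-free graph with exactly $\delta$ vertices has an independent set of size $\alpha$. Then every $K_{t+1}$-minor-free graph is $(\delta-\alpha+2)$-colourable.
   Context: All graphs are finite and simple. A graph is $K_s$-minor-free if it does not contain the complete graph $K_s$ as a minor. A graph is $k$-colourable if it has a proper vertex colouring with at most $k$ colours. *)

(* Defs.v *)
From mathcomp Require Import all_boot.
Set Implicit Arguments. Unset Strict Implicit. Unset Printing Implicit Defensive.

Definition simple_graph (T : finType) (e : rel T) : Prop :=
  symmetric e /\ irreflexive e.

Definition induced_rel (T : finType) (e : rel T) (B : {set T}) : rel T :=
  [rel x y | [&& e x y, x \in B & y \in B]].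

Definition connected_in (T : finType) (e : rel T) (B : {set T}) : Prop :=
  forall x y, x \in B -> y \in B -> connect (induced_rel e B) x y.

Definition has_K_minor (s : nat) (T : finType) (e : rel T) : Prop :=
  exists f : 'I_s -> {set T},
    [/\ forall i, f i != set0,
        forall i, connected_in e (f i),
        forall i j, i != j -> [disjoint f i & f j] &
        forall i j, i != j ->
          exists x, exists y, [/\ x \in f i, y \in f j & e x y]].

Definition K_minor_free (s : nat) (T : finType) (e : rel T) : Prop :=
  ~ has_K_minor s e.

Definition degree (T : finType) (e : rel T) (v : T) : nat :=
  #|[set u | e v u]|.

Definition min_degree_le (T : finType) (e : rel T) (d : nat) : Prop :=
  exists v : T, degree e v <= d.

Definition independent (T : finType) (e : rel T) (S : {set T}) : Prop :=
  forall x y, x \in S -> y \in S -> ~~ e x y.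

Definition colourable (k : nat) (T : finType) (e : rel T) : Prop :=
  exists c : T -> 'I_k, forall x y, e x y -> c x != c y.

(* Main.v *)
Require Import Defs.
From mathcomp Require Import all_boot zify.
Set Implicit Arguments. Unset Strict Implicit. Unset Printing Implicit Defensive.

Lemma disjI (T : finType) (A B : {set T}) :
  (forall x, x \in A -> x \in B -> False) -> [disjoint A & B].
Proof.
move=> H; apply/pred0P => x /=; apply/negbTE/andP => [[xA xB]]; exact: H xA xB.
Qed.

Lemma conn_map (T U : finType) (f : T -> U) (e : rel T) (e' : rel U) :
  (forall x y, e x y -> connect e' (f x) (f y)) ->
  forall x y, connect e x y -> connect e' (f x) (f y).
Proof.
move=> H x y /connectP [p]; elim: p x => [|z p IH] x /=; first by move=> _ ->.
by move=> /andP [exz pz] ly; apply: connect_trans (H _ _ exz) (IH _ pz ly).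
Qed.

Lemma conn_mono (T : finType) (e e' : rel T) :
  (forall x y, e x y -> e' x y) -> forall x y, connect e x y -> connect e' x y.
Proof. by move=> H; apply: (@conn_map T T id) => x y /H; apply: connect1. Qed.

Lemma ind_mono (T : finType) (e : rel T) (A B : {set T}) :
  A \subset B -> forall x y, connect (induced_rel e A) x y -> connect (induced_rel e B) x y.
Proof.
move=> sAB; apply: conn_mono => x y /= /and3P [exy xA yA].
by apply/and3P; split => //; apply: (subsetP sAB).
Qed.

Lemma minor_pull s (T U : finType) (e : rel T) (e' : rel U) (phi : U -> {set T}) :
  (forall u, phi u != set0) -> (forall u, connected_in e (phi u)) ->
  (forall u u', u != u' -> [disjoint phi u & phi u']) ->
  (forall p q, e' p q -> exists a b, [/\ a \in phi p, b \in phi q & e a b]) ->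
  has_K_minor s e' -> has_K_minor s e.
Proof.
move=> ne cn dj ed [f [fne fcn fdj fed]].
exists (fun i => \bigcup_(p in f i) phi p); split.
- move=> i; have /set0Pn [p pf] := fne i; have /set0Pn [a pa] := ne p.
  by apply/set0Pn; exists a; apply/bigcupP; exists p.
- move=> i x y /bigcupP [p pf xp] /bigcupP [q qf yq].
  set G := \bigcup_(p in f i) phi p.
  have A : forall u, u \in f i -> forall a b, a \in phi u -> b \in phi u ->
      connect (induced_rel e G) a b.
    move=> u uf a b au bu; apply: (ind_mono _ (cn u a b au bu)).
    by apply/subsetP => z zu; apply/bigcupP; exists u.
  pose rho u := if [pick a in phi u] is Some a then a else x.
  have rhoP : forall u, rho u \in phi u.
    move=> u; rewrite /rho; case: pickP => [a //|].
    by have /set0Pn [a pa] := ne u => /(_ a); rewrite pa.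
  have B : forall u w, induced_rel e' (f i) u w ->
      connect (induced_rel e G) (rho u) (rho w).
    move=> u w /= /and3P [euw uf wf].
    have [a [b [au bw eab]]] := ed _ _ euw.
    apply: connect_trans (A u uf _ _ (rhoP u) au) _.
    apply: connect_trans (A w wf _ _ bw (rhoP w)).
    apply: connect1; apply/and3P; split => //; apply/bigcupP.
      by exists u. by exists w.
  apply: connect_trans (A p pf _ _ xp (rhoP p)) _.
  apply: connect_trans (A q qf _ _ (rhoP q) yq).
  exact: (conn_map B (fcn i p q pf qf)).
- move=> i j ij; apply: disjI => a /bigcupP [p pf ap] /bigcupP [q qf aq].
  have pq : p != q.
    apply/eqP => epq; subst q.
    by have := disjointFr (fdj i j ij) pf; rewrite qf.
  by have := disjointFr (dj p q pq) ap; rewrite aq.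
- move=> i j ij; have [x [y [xf yf exy]]] := fed i j ij.
  have [a [b [ax bx eab]]] := ed _ _ exy.
  by exists a, b; split => //; apply/bigcupP; [exists x | exists y].
Qed.

Lemma extend k (T : finType) (e : rel T) (v : T) (c0 : T -> 'I_k) :
  simple_graph e ->
  (forall x y, x != v -> y != v -> e x y -> c0 x != c0 y) ->
  #|c0 @: [set u | e v u]| < k -> colourable k e.
Proof.
move=> [sym irr] H Hc.
set C := c0 @: _ in Hc.
have : 0 < #|~: C| by have := cardsC C; rewrite card_ord; lia.
move=> /card_gt0P [col]; rewrite inE => colC.
exists (fun x => if x == v then col else c0 x) => x y exy.
have nC : forall z, e v z -> col != c0 z.
  move=> z evz; apply: contraNneq colC => ->; apply/imsetP; exists z => //.
  by rewrite inE.
case: (x =P v) => [xv|/eqP xv]; case: (y =P v) => [yv|/eqP yv].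
- by subst; rewrite irr in exy.
- by subst; apply: nC.
- by subst; rewrite eq_sym; apply: nC; rewrite sym.
- exact: H.
Qed.

Definition padrel (T : finType) (e : rel T) (N : {set T}) (m : nat) :
  rel ({x : T | x \in N} + 'I_m)%type :=
  fun p q => match p, q with inl a, inl b => e (val a) (val b) | _, _ => false end.
Arguments padrel : clear implicits.

Lemma connect_inr (T : finType) (N : {set T}) m (R : rel ({x : T | x \in N} + 'I_m)%type) r z :
  (forall z, R (inr r) z = false) -> connect R (inr r) z -> z = inr r.
Proof.
move=> H /connectP [[|w p] /=]; first by move=> _ ->.
by rewrite H.
Qed.

Lemma pad_free t (T : finType) (e : rel T) v m : 2 <= t -> simple_graph e ->
  K_minor_free t.+1 e -> K_minor_free t (padrel T e [set u | e v u] m).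
Proof.
move=> ht [sym irr] free [f [fne fcn fdj fed]]; apply: free.
set N := [set u | e v u].
have j0 : 0 < t by lia.
have j1 : 1 < t by lia.
have other : forall i : 'I_t, exists j, i != j.
  move=> i; case: (i =P Ordinal j0) => [->|/eqP ne].
    by exists (Ordinal j1).
  by exists (Ordinal j0).
have noinr : forall i r, inr r \notin f i.
  move=> i r; apply/negP => rf.
  have [j ji] := other i.
  have [x [y [xf yf exy]]] := fed i j ji.
  have := connect_inr (fun z => erefl false) (fcn i _ _ rf xf).
  by move=> ?; subst x.
set h := fun i => [set x | [exists a : {x : T | x \in N}, (val a == x) && (inl a \in f i)]].
have hN : forall i x, x \in h i -> e v x.
  by move=> i x; rewrite inE => /existsP [a /andP [/eqP <- _]]; have := valP a; rewrite inE.
have hI : forall i (a : {x : T | x \in N}), inl a \in f i -> val a \in h i.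
  by move=> i a af; rewrite inE; apply/existsP; exists a; rewrite eqxx.
have hE : forall i x, x \in h i -> exists2 a : {x : T | x \in N}, x = val a & inl a \in f i.
  by move=> i x; rewrite inE => /existsP [a /andP [/eqP <- af]]; exists a.
have hne : forall i, exists x, x \in h i.
  move=> i; have /set0Pn [[a|r] pf] := fne i; first by exists (val a); apply: hI.
  by rewrite (negbTE (noinr _ _)) in pf.
have hcn : forall i, connected_in e (h i).
  move=> i x y /hE [a -> af] /hE [b -> bf].
  pose pi (p : ({x : T | x \in N} + 'I_m)%type) := if p is inl a then val a else v.
  apply: (@conn_map _ _ pi _ _ _ (inl a) (inl b) (fcn i _ _ af bf)).
  move=> [p|p] [q|q] //= /and3P [epq pf qf]; apply: connect1.
  by apply/and3P; split => //; apply: hI.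
exists (fun i : 'I_t.+1 => if unlift ord_max i is Some i' then h i' else [set v]); split.
- move=> i; case: unliftP => [i' _|_]; last by apply/set0Pn; exists v; rewrite inE.
  by have [x xh] := hne i'; apply/set0Pn; exists x.
- move=> i; case: unliftP => [i' _|_]; first exact: hcn.
  by move=> x y; rewrite !inE => /eqP -> /eqP ->.
- move=> i j; case: unliftP => [i' ->|->]; case: unliftP => [j' ->|->] //; last by rewrite eqxx.
  + move=> ij; have ij' : i' != j' by apply: contraNneq ij => ->.
    apply: disjI => x /hE [a -> af] /hE [b eab bf].
    have ab : a = b by apply: val_inj.
    by subst b; have := disjointFr (fdj _ _ ij') af; rewrite bf.
  + move=> _; apply: disjI => x /hN evx; rewrite inE => /eqP xv.
    by subst x; rewrite irr in evx.
  + move=> _; apply: disjI => x; rewrite inE => /eqP -> /hN; by rewrite irr.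
- move=> i j; case: unliftP => [i' ->|->]; case: unliftP => [j' ->|->] //; last by rewrite eqxx.
  + move=> ij; have ij' : i' != j' by apply: contraNneq ij => ->.
    have [[a|r] [[b|r'] [xf yf exy]]] := fed _ _ ij' => //.
    by exists (val a), (val b); split => //; apply: hI.
  + move=> _; have [x xh] := hne i'; exists x, v; split => //; first by rewrite inE.
    by rewrite sym; apply: hN xh.
  + move=> _; have [x xh] := hne j'; exists v, x; split => //; first by rewrite inE.
    by apply: hN xh.
Qed.

Lemma card_lt (T : finType) (P : pred T) v : ~~ P v -> #|{: {x : T | P x}}| < #|T|.
Proof.
move=> Pv; rewrite card_sig; have := cardC [pred x | P x].
have : 0 < #|[predC [pred x | P x]]| by apply/card_gt0P; exists v; rewrite inE.
by move=> h1 h2; rewrite -h2 -[X in X < _]addn0 ltn_add2l.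
Qed.

Lemma empty_col k (T : finType) (e : rel T) : #|T| = 0 -> colourable k.+1 e.
Proof.
move=> T0; exists (fun _ => ord0) => x y _.
have : 0 < #|T| by apply/card_gt0P; exists x.
lia.
Qed.

Lemma star_conn (T : finType) (e : rel T) v (I : {set T}) :
  symmetric e -> (forall x, x \in I -> e v x) -> connected_in e (v |: I).
Proof.
move=> sym IN.
have H : forall z, z \in v |: I -> connect (induced_rel e (v |: I)) z v /\
                                  connect (induced_rel e (v |: I)) v z.
  move=> z; rewrite !inE => /orP [/eqP ->|zI]; first by split.
  have vM : v \in v |: I by rewrite setU11.
  have zM : z \in v |: I by rewrite inE zI orbT.
  split; apply: connect1; apply/and3P; split => //; last by apply: IN.
  by rewrite sym; apply: IN.
move=> x y /H [xv _] /H [_ vy]; exact: connect_trans xv vy.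
Qed.

Lemma main (t delta alpha : nat) (ht : 2 <= t)
  (Hdeg : forall (T : finType) (e : rel T),
      simple_graph e -> K_minor_free t.+1 e -> 0 < #|T| ->
      min_degree_le e delta)
  (Hind : forall (T : finType) (e : rel T),
      simple_graph e -> K_minor_free t e -> #|T| = delta ->
      exists S : {set T}, independent e S /\ #|S| = alpha) :
  forall n (T : finType) (e : rel T), #|T| <= n ->
    simple_graph e -> K_minor_free t.+1 e -> colourable (delta - alpha).+2 e.
Proof.
elim=> [|n IH] T e Tn se free; first by apply: empty_col; lia.
have [T0|Tpos] := posnP #|T|; first exact: empty_col.
have [v degv] := Hdeg T e se free Tpos.
rewrite /degree in degv.
have [sym irr] := se.
set N := [set u | e v u] in degv.
pose P := ({x : T | x \in N} + 'I_(delta - #|N|))%type.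
have [S [indS cardS]] : exists S : {set P},
    independent (padrel T e N (delta - #|N|)) S /\ #|S| = alpha.
  apply: Hind.
  - split; first by move=> [a|r] [b|r'] //=; rewrite sym.
    by move=> [a|r] //=; rewrite irr.
  - exact: pad_free.
  - rewrite card_sum card_ord card_sig.
    have -> : #|[pred x | x \in N]| = #|N| by apply: eq_card.
    lia.
pose SL := [set a : {x : T | x \in N} | inl a \in S].
pose SR := [set r : 'I_(delta - #|N|) | inr r \in S].
pose I := [set val a | a in SL].
have IN : forall x, x \in I -> e v x.
  by move=> x /imsetP [a _ ->]; have := valP a; rewrite inE.
have Iind : forall x y, x \in I -> y \in I -> ~~ e x y.
  move=> x y /imsetP [a aS ->] /imsetP [b bS ->].
  by rewrite !inE in aS bS; have := indS _ _ aS bS.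
have cardI : #|I| = #|SL| by apply: card_imset; apply: val_inj.
have alphab : alpha <= #|I| + (delta - #|N|).
  have sub : S \subset (inl @: SL) :|: (inr @: SR).
    apply/subsetP => [[a|r]] pS; rewrite inE; apply/orP; [left|right];
      apply/imsetP; [exists a|exists r] => //; by rewrite inE.
  rewrite -cardS; apply: leq_trans (subset_leq_card sub) _.
  rewrite cardsU; apply: leq_trans (leq_subr _ _) _; apply: leq_add.
    by rewrite cardI; apply: leq_imset_card.
  apply: leq_trans (leq_imset_card _ _) _.
  by apply: leq_trans (max_card _) _; rewrite card_ord.
have INs : I \subset N by apply/subsetP => x /IN; rewrite inE.
have cINs : #|I| <= #|N| by apply: subset_leq_card.
have [I0|/set0Pn [u0 u0I]] := eqVneq I set0.
-
  pose U := {x : T | x != v}.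
  pose eU : rel U := fun a b => e (val a) (val b).
  have [c' Hc'] : colourable (delta - alpha).+2 eU.
    apply: (IH U eU).
    - have := card_lt (P := fun x => x != v) (v := v); rewrite eqxx => /(_ isT) h.
      by rewrite -ltnS; apply: leq_trans h Tn.
    - by split; [move=> a b; rewrite /eU sym | move=> a; rewrite /eU irr].
    - move=> hm; apply: free; apply: (minor_pull (phi := fun a : U => [set val a])) hm.
      + by move=> a; apply/set0Pn; exists (val a); rewrite inE.
      + by move=> a x y; rewrite !inE => /eqP -> /eqP ->.
      + move=> a b ab; apply: disjI => x; rewrite !inE => /eqP -> /eqP /val_inj ab'.
        by rewrite ab' eqxx in ab.
      + by move=> a b eab; exists (val a), (val b); rewrite !inE !eqxx.
  pose c0 (x : T) := if (insub x : option U) is Some a then c' a else ord0.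
  apply: (extend (v := v) (c0 := c0)) => //.
  + move=> x y xv yv exy; rewrite /c0.
    case: insubP => [a _ ax|]; last by rewrite xv.
    case: insubP => [b _ bx|]; last by rewrite yv.
    by apply: Hc'; rewrite /eU ax bx.
  + have := leq_imset_card c0 N; rewrite I0 cards0 in alphab.
    have -> : #|[set c0 x | x in mem [set u | e v u]]| = #|[set c0 x | x in N]| by [].
    lia.
- (* contract v + I *)
  pose M := v |: I.
  have vu0 : v != u0 by apply: contraTneq (IN _ u0I) => <-; rewrite irr.
  pose U := {x : T | (x \notin M) || (x == u0)}.
  have u0P : (u0 \notin M) || (u0 == u0) by rewrite eqxx orbT.
  pose u0U : U := exist _ u0 u0P.
  pose phi (a : U) := if val a == u0 then M else [set val a].
  have phiv : forall a, val a \in phi a.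
    move=> a; rewrite /phi; case: eqP => [->|_]; last by rewrite inE.
    by rewrite /M !inE u0I orbT.
  pose eU : rel U := fun a b => (a != b) &&
     [exists x, exists y, [&& x \in phi a, y \in phi b & e x y]].
  have symU : forall a b, eU a b -> eU b a.
    move=> a b /andP [ab /existsP [x /existsP [y /and3P [xa yb exy]]]].
    rewrite /eU eq_sym ab; apply/existsP; exists y; apply/existsP; exists x.
    by rewrite xa yb sym exy.
  have [c' Hc'] : colourable (delta - alpha).+2 eU.
    apply: (IH U eU).
    - have := card_lt (P := fun x => (x \notin M) || (x == u0)) (v := v).
      rewrite /M setU11 /= (negbTE vu0) => /(_ isT) h.
      by rewrite -ltnS; apply: leq_trans h Tn.
    - split; first by move=> a b; apply/idP/idP; apply: symU.
      by move=> a; rewrite /eU eqxx.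
    - move=> hm; apply: free; apply: (minor_pull (phi := phi)) hm.
      + by move=> a; apply/set0Pn; exists (val a).
      + move=> a; rewrite /phi; case: eqP => _; first exact: star_conn.
        by move=> x y; rewrite !inE => /eqP -> /eqP ->.
      + have key : forall a b : U, a != b -> val a == u0 -> [disjoint phi a & phi b].
          move=> a b ab au; rewrite /phi au.
          have bu : val b != u0 by apply: contraNneq ab => bu; apply/eqP; apply: val_inj; rewrite bu (eqP au).
          rewrite (negbTE bu); apply: disjI => x xM; rewrite inE => /eqP xb.
          by have := valP b; rewrite /= (negbTE bu) orbF -xb xM.
        move=> a b ab; case: (boolP (val a == u0)) => au; first exact: key.
        case: (boolP (val b == u0)) => bu; first by rewrite disjoint_sym; apply: key; rewrite // eq_sym.
        rewrite /phi (negbTE au) (negbTE bu); apply: disjI => x; rewrite !inE => /eqP -> /eqP /val_inj ab'.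
        by rewrite ab' eqxx in ab.
      + move=> a b /andP [_ /existsP [x /existsP [y /and3P [xa yb exy]]]].
        by exists x, y.
  pose c0 (x : T) := if x \in I then c' u0U
                     else if (insub x : option U) is Some a then c' a else ord0.
  have inU : forall x, x != v -> x \notin I -> exists2 a : U, val a = x & c0 x = c' a.
    move=> x xv xI; rewrite /c0 (negbTE xI).
    case: insubP => [a _ ax|]; first by exists a.
    by rewrite /M !inE (negbTE xv) (negbTE xI).
  have edgeI : forall x y, x \in I -> y != v -> y \notin I -> e x y -> c0 x != c0 y.
    move=> x y xI yv yI exy; have [b bv ->] := inU y yv yI.
    rewrite /c0 xI; apply: Hc'; apply/andP; split.
      by apply: contraNneq yI => ub; rewrite -bv -ub.
    apply/existsP; exists x; apply/existsP; exists y.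
    apply/and3P; split => //; last by rewrite -bv phiv.
    by rewrite /phi /= eqxx /M !inE xI orbT.
  apply: (extend (v := v) (c0 := c0)) => //.
  + move=> x y xv yv exy.
    case: (boolP (x \in I)) => xI; case: (boolP (y \in I)) => yI.
    * by have := Iind x y xI yI; rewrite exy.
    * exact: edgeI.
    * by rewrite eq_sym; apply: edgeI => //; rewrite sym.
    * have [a av ->] := inU x xv xI; have [b bv ->] := inU y yv yI.
      apply: Hc'; apply/andP; split.
        by apply: contraTneq exy => ab; rewrite -bv -av ab irr.
      apply/existsP; exists x; apply/existsP; exists y.
      by apply/and3P; split => //; [rewrite -av | rewrite -bv]; apply: phiv.
  + have sub : c0 @: N \subset c' u0U |: (c0 @: (N :\: I)).
      apply/subsetP => col /imsetP [x xN ->]; rewrite !inE.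
      case: (boolP (x \in I)) => xI; first by rewrite /c0 xI eqxx.
      apply/orP; right; apply/imsetP; exists x => //; by rewrite inE xI.
    have := subset_leq_card sub; rewrite cardsU1.
    have := leq_imset_card c0 (N :\: I).
    rewrite cardsD (setIidPr INs).
    have -> : #|[set c0 x | x in mem [set u | e v u]]| = #|[set c0 x | x in N]| by [].
    have : (c' u0U \notin c0 @: (N :\: I)) <= 1 by case: (_ \notin _).
    lia.
Qed.

Theorem lemma1 (t delta alpha : nat) (ht : 2 <= t)
  (Hdeg : forall (T : finType) (e : rel T),
      simple_graph e -> K_minor_free t.+1 e -> 0 < #|T| ->
      min_degree_le e delta)
  (Hind : forall (T : finType) (e : rel T),
      simple_graph e -> K_minor_free t e -> #|T| = delta ->
      exists S : {set T}, independent e S /\ #|S| = alpha) :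
  forall (T : finType) (e : rel T),
    simple_graph e -> K_minor_free t.+1 e -> colourable (delta - alpha + 2) e.
Proof.
move=> T e se free; rewrite addn2.
exact: (main ht Hdeg Hind (leqnn #|T|) se free).
Qed.
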